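(* Let $r\geq 3$. Then $Z_r$ is $(2,2)$-uniform if and only if $r\leq 4$; $Z_r\backslash y$ is $(2,2)$-uniform if and only if $r\leq 4$; and $Z_r\backslash t$ is $(2,2)$-uniform if and only if $r\leq 5$.
   Context: A matroid is $(2,2)$-uniform if it has no minor isomorphic to $U_{2,2}\oplus U_{0,2}$. For $r\ge3$, the rank-$r$ binary spike $Z_r$ is the vector matroid over $GF(2)$ of the $r\times(2r+1)$ matrix $[I_r\mid J_r-I_r\mid\mathbf 1]$, where $J_r$ is the all-ones $r\times r$ matrix; the last column (the all-ones vector) is the tip $t$, and $y$ denotes any non-tip element of $Z_r$. *)

(* Defs.v *)
From HB Require Import structures.
From mathcomp Require Import all_boot all_order all_algebra all_field.
Set Implicit Arguments. Unset Strict Implicit. Unset Printing Implicit Defensive.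
Import GRing.Theory.
Local Open Scope ring_scope.

(* A (finite) matroid on a subset [ground] of a finite type, given by its
   independent sets. All independent sets are required to lie in [ground]
   by the constructions below. *)
Record matroid (T : finType) := Matroid {
  ground : {set T};
  indep : {set T} -> bool }.

Definition max_indep_in (T : finType) (M : matroid T) (X J : {set T}) : bool :=
  [&& J \subset X, indep M J & [forall x in X :\: J, ~~ indep M (x |: J)]].

Definition delete (T : finType) (M : matroid T) (D : {set T}) : matroid T :=
  Matroid (ground M :\: D)
          (fun I => (I \subset ground M :\: D) && indep M I).

Definition contract (T : finType) (M : matroid T) (C : {set T}) : matroid T :=
  Matroid (ground M :\: C)
          (fun I => (I \subset ground M :\: C) &&
             [exists J : {set T}, max_indep_in M C J && indep M (I :|: J)]).

Definition iso (T1 T2 : finType) (M1 : matroid T1) (M2 : matroid T2) : Prop :=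
  exists f : T1 -> T2,
    [/\ {in ground M1 &, injective f},
        f @: ground M1 = ground M2 &
        forall I : {set T1}, I \subset ground M1 ->
          indep M1 I = indep M2 (f @: I)].

Definition has_minor_iso (T T' : finType) (M : matroid T) (N : matroid T') : Prop :=
  exists C D : {set T},
    [/\ C \subset ground M, D \subset ground M, [disjoint C & D] &
        iso N (delete (contract M C) D)].

Definition uniform_matroid (k n : nat) : matroid 'I_n :=
  Matroid setT (fun I => (#|I| <= k)%N).

Definition direct_sum (T1 T2 : finType) (M1 : matroid T1) (M2 : matroid T2)
  : matroid (T1 + T2)%type :=
  Matroid (inl @: ground M1 :|: inr @: ground M2)
          (fun I => [&& I \subset inl @: ground M1 :|: inr @: ground M2,
                        indep M1 [set x | inl x \in I] &
                        indep M2 [set x | inr x \in I]]).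

Definition U22_U02 := direct_sum (uniform_matroid 2 2) (uniform_matroid 0 2).

Definition two_two_uniform (T : finType) (M : matroid T) : Prop :=
  ~ has_minor_iso M U22_U02.

Definition vector_matroid (F : fieldType) (m n : nat) (A : 'M[F]_(m, n))
  : matroid 'I_n :=
  Matroid setT (fun I => free [seq col j A | j <- enum I]).

Definition spike_mx (r : nat) : 'M['F_2]_(r, r + r + 1) :=
  row_mx (row_mx 1%:M (const_mx 1 - 1%:M)) (const_mx 1).

Definition spike (r : nat) : matroid 'I_(r + r + 1) := vector_matroid (spike_mx r).

(* The tip: the last column (all-ones vector) *)
Definition tip (r : nat) : 'I_(r + r + 1) := rshift (r + r) (ord0 : 'I_1).

(* Main.v *)
Require Import Defs.
From mathcomp Require Import all_boot all_order all_algebra all_field zify.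
Set Implicit Arguments. Unset Strict Implicit. Unset Printing Implicit Defensive.
Import GRing.Theory.
Local Open Scope ring_scope.

Section Vec.
Variables (m n : nat) (A : 'M['F_2]_(m, n)).
Definition cols (I : {set 'I_n}) := [seq col j A | j <- enum I].

Lemma F2_cases (x : 'F_2) : x = 0 \/ x = 1.
Proof. case: x => [[|[|k]] Hk] //; [left|right]; exact/val_inj. Qed.

Lemma addvv (v : 'cV['F_2]_m) : v + v = 0.
Proof. by rewrite -{1 2}(scale1r v) -scalerDl (_ : 1 + 1 = 0) ?scale0r //; apply/eqP. Qed.

Lemma free_setU1 x (J : {set 'I_n}) : x \notin J ->
  free (cols (x |: J)) = (col x A \notin <<cols J>>%VS) && free (cols J).
Proof.
move=> xJ; rewrite -free_cons; apply: perm_free; rewrite /cols.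
rewrite (_ : col x A :: _ = [seq col j A | j <- x :: enum J]) //.
apply: perm_map; apply: uniq_perm; first exact: enum_uniq.
  by rewrite /= mem_enum xJ enum_uniq.
by move=> z; rewrite mem_enum in_setU1 in_cons mem_enum.
Qed.

Lemma free_sub (I I' : {set 'I_n}) : I \subset I' -> free (cols I') -> free (cols I).
Proof.
move=> sII'; rewrite (@perm_free _ _ (cols I') (cols I ++ cols (I' :\: I))).
  exact: catl_free.
rewrite /cols -map_cat; apply: perm_map; apply: uniq_perm; first exact: enum_uniq.
  rewrite cat_uniq !enum_uniq /= andbT; apply/hasPn => z; rewrite !mem_enum !inE.
  by case/andP=> /negbTE ->.
move=> z; rewrite mem_cat !mem_enum !inE; case: (boolP (z \in I)) => zI //=.
by rewrite (subsetP sII') .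
Qed.

Lemma span_sum (s : seq 'I_n) v : v \in <<[seq col j A | j <- s]>>%VS ->
  exists2 P : {set 'I_n}, P \subset [set j in s] & v = \sum_(j in P) col j A.
Proof.
elim: s v => [|x s IH] v /=.
  rewrite span_nil memv0 => /eqP ->; exists set0; first exact: sub0set.
  by rewrite big_set0.
rewrite span_cons => /memv_addP [u /vlineP [k ->] [w /IH [P sP ->] ->]].
have sP' : P \subset [set j in x :: s].
  by apply/subsetP => z /(subsetP sP); rewrite !inE => ->; rewrite orbT.
case: (F2_cases k) => ->; first by exists P; rewrite // scale0r add0r.
rewrite scale1r; case: (boolP (x \in P)) => xP.
  exists (P :\ x); first by apply: subset_trans sP'; apply: subsetDl.
  by rewrite (big_setD1 _ xP) addrA addvv add0r.
exists (x |: P); last by rewrite big_setU1.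
by apply/subsetP => z; rewrite !inE => /orP [->//|/(subsetP sP')]; rewrite inE.
Qed.

Lemma sum_span (I P : {set 'I_n}) : P \subset I -> \sum_(j in P) col j A \in <<cols I>>%VS.
Proof.
move=> sPI; apply: rpred_sum => j jP; apply: memv_span; apply: map_f.
by rewrite mem_enum (subsetP sPI).
Qed.

Lemma col_span (I : {set 'I_n}) j : j \in I -> col j A \in <<cols I>>%VS.
Proof. by move=> jI; apply: memv_span; apply: map_f; rewrite mem_enum. Qed.

Lemma free_nozs (I : {set 'I_n}) :
  (forall Z : {set 'I_n}, Z \subset I -> \sum_(j in Z) col j A = 0 -> Z = set0) -> free (cols I).
Proof.
elim: {I}_.+1 {-2}I (ltnSn #|I|) => // N IH I leIN H.
case: (set_0Vmem I) => [->|[x xI]].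
  by rewrite /cols enum_set0 nil_free.
rewrite -(setD1K xI) free_setU1 ?setD11 //; apply/andP; split; last first.
  apply: IH => [|Z sZ]; first by rewrite (cardsD1 x I) xI in leIN.
  by apply: H; apply: subset_trans sZ _; apply: subsetDl.
apply/negP => /span_sum [P sP eP].
have xP : x \notin P.
  by apply/negP => /(subsetP sP); rewrite inE mem_enum !inE eqxx.
have sZ : \sum_(j in x |: P) col j A = 0 by rewrite big_setU1 //= -eP addvv.
have : x |: P \subset I.
  apply/subsetP => z; rewrite !inE => /orP [/eqP ->//|/(subsetP sP)].
  by rewrite inE mem_enum => /setD1P [].
move=> /H /(_ sZ) /setP /(_ x); by rewrite !inE eqxx.
Qed.

Lemma free_size (I : {set 'I_n}) : free (cols I) -> (#|I| <= m)%N.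
Proof.
move=> /eqP fI; have := dimvS (subvf <<cols I>>%VS).
by rewrite fI dimvf /dim /= size_map -cardE muln1.
Qed.

Lemma span_of_dep x (J : {set 'I_n}) : x \notin J -> free (cols J) ->
  ~~ free (cols (x |: J)) -> col x A \in <<cols J>>%VS.
Proof. by move=> xJ fJ; rewrite free_setU1 // fJ andbT negbK. Qed.

Lemma dep_of_span x (J : {set 'I_n}) : x \notin J ->
  col x A \in <<cols J>>%VS -> ~~ free (cols (x |: J)).
Proof. by move=> xJ xs; rewrite free_setU1 // xs. Qed.
End Vec.

Section Spike.
Variable r : nat.
Definition xs (i : 'I_r) : 'I_(r+r+1) := lshift 1 (lshift r i).
Definition ys (i : 'I_r) : 'I_(r+r+1) := lshift 1 (rshift r i).
Notation t := (tip r).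
Notation M := (spike_mx r).

Lemma val_xs i : nat_of_ord (xs i) = i. Proof. by []. Qed.
Lemma val_ys i : nat_of_ord (ys i) = (r + i)%N. Proof. by []. Qed.
Lemma val_t : nat_of_ord t = (r + r)%N. Proof. by rewrite /= addn0. Qed.

Lemma M_xs i l : M i (xs l) = (i == l)%:R.
Proof. by rewrite /spike_mx /xs !row_mxEl mxE. Qed.
Lemma M_ys i l : M i (ys l) = 1 - (i == l)%:R.
Proof. by rewrite /spike_mx /ys row_mxEl row_mxEr !mxE. Qed.
Lemma M_t i : M i t = 1.
Proof. by rewrite /spike_mx /tip row_mxEr !mxE. Qed.

Lemma sum_pred1 (P : pred 'I_r) i : \sum_(l < r | P l) ((i == l)%:R : 'F_2) = (P i)%:R.
Proof.
rewrite big_mkcond (bigD1 i) //= eqxx big1 ?addr0; first by case: (P i).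
by move=> l; rewrite eq_sym => /negbTE ->; case: (P l).
Qed.

Lemma sum_coord (Z : {set 'I_(r+r+1)}) i :
  (\sum_(j in Z) col j M) i ord0 =
  (xs i \in Z)%:R - (ys i \in Z)%:R + \sum_(l < r | ys l \in Z) 1 + (t \in Z)%:R.
Proof.
rewrite summxE.
under eq_bigr => j _ do rewrite mxE.
rewrite big_split_ord /= big_split_ord /=.
under eq_bigr => j _ do rewrite -/(xs j) M_xs.
under [X in _ + X + _]eq_bigr => j _ do rewrite -/(ys j) M_ys.
rewrite sum_pred1 sumrB sum_pred1 [\sum_(i0 < 1 | _) _]big_mkcond big_ord1 /= M_t.
rewrite -/t -/(xs i) -/(ys i) addrA; congr (_ + _).
  by rewrite addrC addrA [_ + (_ %:R)]addrC.
by case: (t \in Z).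
Qed.

Definition zs (Z : {set 'I_(r+r+1)}) := \sum_(j in Z) col j M = 0.
Definition balanced (Z : {set 'I_(r+r+1)}) := forall i, (xs i \in Z) = (ys i \in Z).
Definition nY (Z : {set 'I_(r+r+1)}) := \sum_(l < r | ys l \in Z) (1 : 'F_2).
Definition sdiff (Z1 Z2 : {set 'I_(r+r+1)}) := (Z1 :\: Z2) :|: (Z2 :\: Z1).

Lemma zs_coord Z i : zs Z ->
  (xs i \in Z)%:R - (ys i \in Z)%:R + nY Z + (t \in Z)%:R = 0 :> 'F_2.
Proof. by move=> zZ; rewrite -sum_coord zZ mxE. Qed.

Lemma decomp z : (exists i, z = xs i) \/ (exists i, z = ys i) \/ z = t.
Proof.
have := ltn_ord z; case: (ltnP z r) => h1 h0.
  by left; exists (Ordinal h1); apply/val_inj.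
case: (ltnP z (r + r)) => h2.
  have h3 : (z - r < r)%N by lia.
  by right; left; exists (Ordinal h3); apply/val_inj => /=; lia.
by right; right; apply/val_inj => /=; lia.
Qed.

Lemma F2_bool_eq (a b : bool) : (a%:R - b%:R : 'F_2) = 0 -> a = b.
Proof. by case: a; case: b => // /eqP. Qed.

Lemma uniq_card (s : seq 'I_(r+r+1)) (Z : {set 'I_(r+r+1)}) :
  uniq s -> all (mem Z) s -> (size s <= #|Z|)%N.
Proof.
move=> us /allP aZ; rewrite -(card_uniqP us); apply: subset_leq_card.
by apply/subsetP => z /aZ.
Qed.

Lemma zs_small_bal Z : zs Z -> (#|Z| < r)%N -> balanced Z.
Proof.
move=> zZ cZ.
have [i0 /andP [x0 y0]] : exists i, (xs i \notin Z) && (ys i \notin Z).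
  apply/existsP; apply/negP => /existsP H.
  pose g i := if xs i \in Z then xs i else ys i.
  have ig : injective g.
    move=> i j; rewrite /g; apply: contra_eq => nij.
    have := ltn_ord i; have := ltn_ord j.
    have : (i : nat) <> j by move=> /ord_inj; apply/eqP.
    case: (xs i \in Z); case: (xs j \in Z); rewrite -val_eqE /= => ? ? ?; lia.
  have : (#|g @: setT| <= #|Z|)%N.
    apply: subset_leq_card; apply/subsetP => z /imsetP [i _ ->]; rewrite /g.
    case: (boolP (xs i \in Z)) => // xi.
    case: (boolP (ys i \in Z)) => // yi; exfalso; apply: H; exists i; by rewrite xi yi.
  by rewrite card_imset // cardsT card_ord; lia.
have E := zs_coord i0 zZ; rewrite (negbTE x0) (negbTE y0) subr0 add0r in E.
move=> i; apply: F2_bool_eq; have := zs_coord i zZ.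
by rewrite -addrA E addr0.
Qed.

Lemma bal_E Z : (0 < r)%N -> balanced Z -> zs Z -> nY Z + (t \in Z)%:R = 0.
Proof.
move=> r0 bZ zZ; have := zs_coord (Ordinal r0) zZ.
by rewrite bZ subrr add0r.
Qed.

Lemma bal_sdiff Z1 Z2 : balanced Z1 -> balanced Z2 -> balanced (sdiff Z1 Z2).
Proof. by move=> b1 b2 i; rewrite !inE b1 b2. Qed.

Lemma zs_sdiff Z1 Z2 : zs Z1 -> zs Z2 -> zs (sdiff Z1 Z2).
Proof.
rewrite /zs /sdiff => z1 z2.
rewrite (big_setID Z1).
have -> : (Z1 :\: Z2 :|: Z2 :\: Z1) :&: Z1 = Z1 :\: Z2.
  by apply/setP => z; rewrite !inE; case: (z \in Z1); case: (z \in Z2).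
have -> : (Z1 :\: Z2 :|: Z2 :\: Z1) :\: Z1 = Z2 :\: Z1.
  by apply/setP => z; rewrite !inE; case: (z \in Z1); case: (z \in Z2).
move: z1 z2; rewrite (big_setID (A := Z1) Z2) (big_setID (A := Z2) Z1) setIC /=.
set a := \sum_(i in Z2 :&: Z1) _; set b := \sum_(i in Z1 :\: Z2) _.
set c := \sum_(i in Z2 :\: Z1) _ => h1 h2.
have := addrACA a b a c; rewrite addvv add0r h1 h2 addr0; by move<-.
Qed.

Lemma card_bal Z : (0 < r)%N -> balanced Z -> zs Z -> Z != set0 ->
  (3 + (t \notin Z) <= #|Z|)%N.
Proof.
move=> r0 bZ zZ /set0Pn [z zin].
have E := bal_E r0 bZ zZ.
case: (boolP (t \in Z)) => tZ.
  case: (pickP (fun l => ys l \in Z)) => [l yl|none]; last first.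
    by move: E; rewrite /nY big_pred0 // tZ.
  have xl : xs l \in Z by rewrite bZ.
  have := @uniq_card [:: xs l; ys l; t] Z; rewrite /= xl yl tZ addn0; apply => //.
  rewrite !inE -!val_eqE /= ?addn0; have := ltn_ord l; lia.
have [i [xi yi]] : exists i, xs i \in Z /\ ys i \in Z.
  case: (decomp z) => [[i ezi]|[[i ezi]|ezt]].
  - by exists i; rewrite -bZ -ezi.
  - by exists i; rewrite bZ -ezi.
  - by rewrite -ezt zin in tZ.
move: E; rewrite (negbTE tZ) addr0 /nY (bigD1 i) //=.
case: (pickP (fun l => (ys l \in Z) && (l != i))) => [k /andP [yk ki]|none]; last first.
  by rewrite big_pred0.
move=> _; have xk : xs k \in Z by rewrite bZ.
have := @uniq_card [:: xs i; ys i; xs k; ys k] Z; rewrite /= xi yi xk yk; apply => //.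
move: ki; rewrite !inE -!val_eqE /=; have := ltn_ord i; have := ltn_ord k; lia.
Qed.

Lemma card_sdiff (Z1 Z2 : {set 'I_(r+r+1)}) : (#|Z1| + #|Z2| + #|sdiff Z1 Z2| = 2 * #|Z1 :|: Z2|)%N.
Proof.
have h1 := cardsID Z2 Z1; have h2 := cardsID Z1 Z2; have h3 := cardsUI Z1 Z2.
have h4 := cardsUI (Z1 :\: Z2) (Z2 :\: Z1).
have e : (Z1 :\: Z2) :&: (Z2 :\: Z1) = set0.
  by apply/setP => z; rewrite !inE; case: (z \in Z1); case: (z \in Z2).
rewrite e cards0 in h4; rewrite setIC in h2; rewrite /sdiff; lia.
Qed.

Lemma zs_of_span c (J : {set 'I_(r+r+1)}) : c \notin J ->
  col c M \in <<cols M J>>%VS ->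
  exists Z, [/\ zs Z, c \in Z & Z \subset c |: J].
Proof.
move=> cJ /span_sum [P sP eP].
have sPJ : P \subset J by apply/subsetP => z /(subsetP sP); rewrite inE mem_enum.
have cP : c \notin P by apply: contra cJ; apply: (subsetP sPJ).
exists (c |: P); split; first by rewrite /zs big_setU1 //= -eP addvv.
  by rewrite setU11.
by apply: setUS.
Qed.

Lemma memN0 (Z : {set 'I_(r+r+1)}) z : z \in Z -> Z != set0.
Proof. by move=> zZ; apply/set0Pn; exists z. Qed.

Lemma spike_bound (J : {set 'I_(r+r+1)}) c d : (0 < r)%N ->
  c \notin J -> d \notin J -> c != d -> (#|J| + 2 <= r)%N ->
  col c M \in <<cols M J>>%VS -> col d M \in <<cols M J>>%VS ->
  (5 + (t \notin c |: (d |: J)) <= #|J| + 2)%N.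
Proof.
move=> r0 cJ dJ cd hJ /(zs_of_span cJ) [Z1 [z1 c1 s1]] /(zs_of_span dJ) [Z2 [z2 d2 s2]].
have cs1 := subset_leq_card s1; have cs2 := subset_leq_card s2.
rewrite cardsU1 cJ add1n in cs1; rewrite cardsU1 dJ add1n in cs2.
have b1 : balanced Z1 by apply: zs_small_bal => //; apply: leq_ltn_trans cs1 _; lia.
have b2 : balanced Z2 by apply: zs_small_bal => //; apply: leq_ltn_trans cs2 _; lia.
have c2 : c \notin Z2.
  by apply/negP => /(subsetP s2); rewrite !inE (negbTE cJ) orbF; apply/negP.
have d1 : d \notin Z1.
  by apply/negP => /(subsetP s1); rewrite !inE (negbTE dJ) orbF eq_sym; apply/negP.
have k1 := card_bal r0 b1 z1 (memN0 c1).
have k2 := card_bal r0 b2 z2 (memN0 d2).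
have c3 : c \in sdiff Z1 Z2 by rewrite !inE c1 c2.
have k3 := card_bal r0 (bal_sdiff b1 b2) (zs_sdiff z1 z2)
   (memN0 c3).
have hU : (#|Z1 :|: Z2| <= #|J| + 2)%N.
  have : Z1 :|: Z2 \subset c |: (d |: J).
    apply/subsetP => z; rewrite inE => /orP [/(subsetP s1)|/(subsetP s2)];
      rewrite !inE => /orP [->|->]; rewrite ?orbT //.
  move/subset_leq_card; rewrite cardsU1 cardsU1 dJ inE (negbTE cJ) orbF.
  by rewrite in_set1 cd add1n add1n addn2.
have hS := card_sdiff Z1 Z2.
have tU : (t \notin c |: (d |: J)) -> (t \notin Z1) && (t \notin Z2).
  move=> tn; apply/andP; split; apply: contra tn => tz.
    by move: (subsetP s1 _ tz); rewrite !inE => /orP [->|->]; rewrite ?orbT.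
  by move: (subsetP s2 _ tz); rewrite !inE => /orP [->|->]; rewrite ?orbT.
have t3 : (t \in sdiff Z1 Z2) = (t \in Z1) (+) (t \in Z2).
  by rewrite !inE; case: (t \in Z1); case: (t \in Z2).
rewrite t3 in k3.
move: hS hU k1 k2 k3 tU; clear.
case: (t \in c |: (d |: J)); case: (t \in Z1); case: (t \in Z2) => /=;
  move=> hS hU k1 k2 k3 tU; try (have := tU erefl; done); lia.
Qed.
End Spike.

Lemma I2_cases (i : 'I_2) : i = ord0 \/ i = ord_max.
Proof. case: i => [[|[|k]] Hk]; [left|right|by []]; exact/val_inj. Qed.

Lemma groundN : ground U22_U02 = setT.
Proof. by apply/setP => [[x|x]]; rewrite !inE ?imset_f ?orbT. Qed.

Lemma indepN (I : {set ('I_2 + 'I_2)%type}) :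
  indep U22_U02 I = (inr ord0 \notin I) && (inr ord_max \notin I).
Proof.
have hs : I \subset ground U22_U02 by rewrite groundN subsetT.
move: hs; rewrite /= => -> /=.
have -> : (#|[set x | inl x \in I]| <= 2)%N.
  by apply: leq_trans (max_card _) _; rewrite card_ord.
rewrite leqn0 cards_eq0 /=; apply/eqP/andP => [/setP H|[H1 H2]].
  by have := H ord0; have := H ord_max; rewrite !inE => -> ->.
by apply/setP => x; rewrite !inE; case: (I2_cases x) => ->; apply/negbTE.
Qed.

Section Mat.
Variables (m n : nat) (A : 'M['F_2]_(m, n)) (Mt : matroid 'I_n).
Hypothesis HM : forall I, indep Mt I = (I \subset ground Mt) && free (cols A I).

Lemma max_span (C J : {set 'I_n}) x : max_indep_in Mt C J -> C \subset ground Mt -> x \in C ->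
  col x A \in <<cols A J>>%VS.
Proof.
move=> /and3P [sJ iJ /forall_inP H] sC xC.
case: (boolP (x \in J)) => xJ; first exact: col_span.
apply: span_of_dep => //; first by move: iJ; rewrite HM => /andP [].
have := H x; rewrite !inE xJ xC => /(_ isT); rewrite HM; apply: contra => fr.
rewrite fr andbT; apply/subsetP => z; rewrite !inE => /orP [/eqP ->|zJ].
  exact: (subsetP sC).
by apply: (subsetP sC); apply: (subsetP sJ).
Qed.

Lemma minor_extract : has_minor_iso Mt U22_U02 ->
  exists (J : {set 'I_n}) c d, [/\ J \subset ground Mt, c \in ground Mt, d \in ground Mt,
    [/\ c \notin J, d \notin J, c != d & (#|J| + 2 <= m)%N] &
    col c A \in <<cols A J>>%VS /\ col d A \in <<cols A J>>%VS].
Proof.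
move=> [C [D [sC sD dCD [f [finj fim find]]]]].
have gN x : x \in ground U22_U02 by rewrite groundN inE.
have gm x : f x \in (ground Mt :\: C) :\: D.
  by have := imset_f f (gN x); rewrite fim.
have fneq x y : x != y -> f x != f y.
  by move=> xy; apply: contra xy => /eqP /finj; rewrite !gN => /(_ isT isT) ->.
have nC x : f x \notin C by move: (gm x); rewrite !inE => /and3P [_ ->].
have inG x : f x \in ground Mt by move: (gm x); rewrite !inE => /and3P [].
have sGN (I : {set ('I_2 + 'I_2)%type}) : I \subset ground U22_U02 by rewrite groundN subsetT.
have sGM (I : {set ('I_2 + 'I_2)%type}) : f @: I \subset (ground Mt :\: C) :\: D.
  by rewrite (_ : (ground Mt :\: C) :\: D = ground (delete (contract Mt C) D)) // -fim; apply: imsetS; apply: sGN.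
have sGM' (I : {set ('I_2 + 'I_2)%type}) : f @: I \subset ground Mt :\: C.
  by apply: subset_trans (sGM I) _; apply: subsetDl.
set a := f (inl ord0); set b := f (inl ord_max).
set c := f (inr ord0); set d := f (inr ord_max).
have iab := find _ (sGN [set inl ord0; inl ord_max]).
rewrite indepN !inE /= (sGM _) (sGM' _) /= in iab.
case/existsP: (esym iab) => J /andP [mJ iJ].
have ic := find _ (sGN [set inr ord0]); rewrite indepN !inE eqxx /= in ic.
have id := find _ (sGN [set inr ord_max]); rewrite indepN !inE eqxx ?andbF ?orbT /= in id.
rewrite (sGM _) (sGM' _) /= imset_set1 in ic.
rewrite (sGM _) (sGM' _) /= imset_set1 in id.
have nc := negbT (esym ic); have nd := negbT (esym id).
rewrite negb_exists in nc; rewrite negb_exists in nd.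
move: nc => /forallP nc; have {nc} := nc J; rewrite mJ /= => nc.
move: nd => /forallP nd; have {nd} := nd J; rewrite mJ /= => nd.
case/and3P: (mJ) => sJ iJ0 _.
have sJG : J \subset ground Mt := subset_trans sJ sC.
have JnC x : f x \notin J by apply: contra (nC x); apply: (subsetP sJ).
have fJ : free (cols A J) by move: iJ0; rewrite HM => /andP [].
have sub1 x : f x |: J \subset ground Mt.
  by apply/subsetP => z; rewrite !inE => /orP [/eqP ->|/(subsetP sJG)].
exists J, c, d; split; [exact: sJG | exact: inG | exact: inG | split | split].
- exact: JnC.
- exact: JnC.
- by apply: fneq.
- move: iJ; rewrite HM => /andP [_].
  rewrite imsetU1 imset_set1 -setUA => /free_size.
  rewrite cardsU1 cardsU1 (JnC _) inE negb_or (JnC _) in_set1 (@fneq (inl ord0) (inl ord_max) isT).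
  by rewrite andbT add1n add1n addn2.
- apply: (span_of_dep (JnC _) fJ); by move: nc; rewrite HM sub1.
- apply: (span_of_dep (JnC _) fJ); by move: nd; rewrite HM sub1.
Qed.

End Mat.


Section Mat2.
Variables (m n : nat) (A : 'M['F_2]_(m, n)) (Mt : matroid 'I_n).
Hypothesis HM : forall I, indep Mt I = (I \subset ground Mt) && free (cols A I).

Lemma minor_construct (C : {set 'I_n}) a b c d :
  C \subset ground Mt -> a \in ground Mt -> b \in ground Mt ->
  c \in ground Mt -> d \in ground Mt ->
  a \notin C -> b \notin C -> c \notin C -> d \notin C ->
  uniq [:: a; b; c; d] ->
  free (cols A (a |: (b |: C))) ->
  col c A \in <<cols A C>>%VS -> col d A \in <<cols A C>>%VS ->
  has_minor_iso Mt U22_U02.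
Proof.
move=> sC aG bG cG dG aC bC cC dC U fr cs ds.
move: U; rewrite /= !inE !negb_or => /and4P [/and3P [ab ac ad] /andP [bc bd] cd _].
pose K := [set a; b; c; d].
pose D := ground Mt :\: (C :|: K).
pose f (s : ('I_2 + 'I_2)%type) := match s with
  | inl i => if i == ord0 then a else b
  | inr i => if i == ord0 then c else d end.
pose g z : ('I_2 + 'I_2)%type := if z == a then inl ord0 else if z == b then inl ord_max
  else if z == c then inr ord0 else inr ord_max.
have ba : b != a by rewrite eq_sym.
have ca : c != a by rewrite eq_sym.
have da : d != a by rewrite eq_sym.
have cb : c != b by rewrite eq_sym.
have db : d != b by rewrite eq_sym.
have dc : d != c by rewrite eq_sym.
have fK : cancel f g.
  case=> i; case: (I2_cases i) => -> /=; rewrite /g ?eqxx;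
    by rewrite ?(negbTE ba, negbTE ca, negbTE da, negbTE cb, negbTE db, negbTE dc).
have finj : injective f := can_inj fK.
have fim : f @: setT = K.
  apply/setP => z; rewrite !inE; apply/imsetP/idP.
    case=> [[i|i] _ ->]; case: (I2_cases i) => -> /=; rewrite !eqxx ?orbT //.
  move=> /orP [/orP [/orP [] | ] | ] /eqP ->.
  - by exists (inl ord0).
  - by exists (inl ord_max).
  - by exists (inr ord0).
  - by exists (inr ord_max).
have gK : (ground Mt :\: C) :\: D = K.
  apply/setP => z; rewrite /D /K !inE.
  set k := (z == a) || _ || _ || _.
  case: (boolP k) => zK.
    have zG : z \in ground Mt by move: zK => /orP [/orP [/orP [] | ] | ] /eqP ->.
    have zC : z \notin C by move: zK => /orP [/orP [/orP [] | ] | ] /eqP ->.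
    by rewrite zG zC ?orbT.
  by rewrite ?orbF ?andbT /=; case: (z \in C); case: (z \in ground Mt).
have fCs : free (cols A C).
  by apply: free_sub fr; apply/subsetP => z zC; rewrite !inE zC !orbT.
have iC : indep Mt C by rewrite HM sC.
have mC : max_indep_in Mt C C.
  by rewrite /max_indep_in subxx iC /=; apply/forall_inP => x; rewrite setDv inE.
exists C, D; split => //.
- exact: subsetDl.
- rewrite disjoints_subset; apply/subsetP => z zC; by rewrite !inE zC /= ?andbF.
exists f; split.
- by move=> x y _ _; apply: finj.
- by rewrite groundN fim /= gK.
move=> I _; rewrite indepN /=.
have sK : f @: I \subset K by rewrite -fim; apply: imsetS; apply: subsetT.
have sKG : K \subset ground Mt.
  by apply/subsetP => z; rewrite !inE => /orP [/orP [/orP [] | ] | ] /eqP ->.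
rewrite -gK in sK; rewrite sK (subset_trans sK (subsetDl _ _)) /=; rewrite gK in sK.
have e0 : (inr ord0 \in I) = (c \in f @: I) by rewrite (_ : c = f (inr ord0)) // mem_imset.
have e1 : (inr ord_max \in I) = (d \in f @: I) by rewrite (_ : d = f (inr ord_max)) // mem_imset.
rewrite e0 e1.
have dep x J : x \in f @: I -> x \notin C -> col x A \in <<cols A C>>%VS ->
    max_indep_in Mt C J -> ~~ indep Mt (f @: I :|: J).
  move=> xI xC xs mJ; rewrite HM negb_and; apply/orP; right.
  have sJ : J \subset C by case/and3P: mJ.
  have xJ : x \notin J by apply: contra xC; apply: (subsetP sJ).
  have xsJ : col x A \in <<cols A J>>%VS.
    case/span_sum: xs => P sP ->; apply: rpred_sum => j jP.
    apply: (max_span HM mJ sC); move: (subsetP sP j jP); by rewrite inE mem_enum.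
  apply: contra (dep_of_span xJ xsJ); apply: free_sub.
  by apply/subsetP => z; rewrite !inE => /orP [/eqP ->|->]; rewrite ?xI ?orbT.
case: (boolP (c \in f @: I)) => cI /=.
  apply/esym/negbTE; rewrite negb_exists; apply/forallP => J; apply/negP => /andP [mJ].
  by apply/negP; apply: dep cI cC cs mJ.
case: (boolP (d \in f @: I)) => dI /=.
  apply/esym/negbTE; rewrite negb_exists; apply/forallP => J; apply/negP => /andP [mJ].
  by apply/negP; apply: dep dI dC ds mJ.
apply/esym/existsP; exists C; rewrite mC /= HM; apply/andP; split.
  by rewrite subUset sC (subset_trans sK sKG).
apply: free_sub fr; apply/subsetP => z; rewrite inE => /orP [zI|zC]; last first.
  by rewrite !inE zC !orbT.
move: (zI) => /imsetP [[i|i] iI ez]; case: (I2_cases i) => ei; subst i; rewrite ez !inE.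
- by rewrite eqxx.
- by rewrite eqxx orbT.
- have e : c = z by rewrite ez.
  by rewrite e zI in cI.
- have e : d = z by rewrite ez.
  by rewrite e zI in dI.
Qed.
End Mat2.


Section Final.
Variable r : nat.
Notation t := (tip r).
Notation M := (spike_mx r).

Lemma nY_one (Z : {set 'I_(r+r+1)}) p : (forall l, l != p -> ys l \notin Z) ->
  nY Z = (ys p \in Z)%:R.
Proof.
move=> H; rewrite /nY big_mkcond (bigD1 p) //= big1 ?addr0; first by case: (ys p \in Z).
by move=> l lp; rewrite (negbTE (H l lp)).
Qed.

Lemma F2b (b : bool) : (b%:R : 'F_2) = 0 -> b = false.
Proof. by case: b => // /eqP. Qed.

Lemma xs_out (Z : {set 'I_(r+r+1)}) i : zs Z -> ys i \notin Z -> nY Z = 0 ->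
  t \notin Z -> xs i \notin Z.
Proof.
move=> zZ yi n0 tZ; have := zs_coord i zZ.
by rewrite n0 (negbTE yi) (negbTE tZ) subr0 !addr0 => /F2b ->.
Qed.

Lemma addE (A B : 'cV['F_2]_r) i k : (A + B) i k = A i k + B i k.
Proof. by rewrite mxE. Qed.

Lemma colM j i k : col j M i k = M i j.
Proof. by rewrite mxE. Qed.

Lemma col_ys_t p : col (ys p) M = col (xs p) M + col t M.
Proof.
apply/matrixP => i j; rewrite !addE !colM M_ys M_xs M_t.
by case: (i == p); apply/eqP.
Qed.

Lemma col_ys_B p q : col (ys q) M = col (xs p) M + col (ys p) M + col (xs q) M.
Proof.
apply/matrixP => i j; rewrite !addE !colM !M_ys !M_xs.
by case: (i == p); case: (i == q); apply/eqP.
Qed.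

Lemma HM_spike : forall I, indep (spike r) I = (I \subset ground (spike r)) && free (cols M I).
Proof. by move=> I; rewrite /= subsetT. Qed.

Lemma HM_del Y : forall I, indep (delete (spike r) Y) I =
  (I \subset ground (delete (spike r) Y)) && free (cols M I).
Proof. by []. Qed.

Lemma bound (Mt : matroid 'I_(r+r+1)) :
  (forall I, indep Mt I = (I \subset ground Mt) && free (cols M I)) ->
  (0 < r)%N -> has_minor_iso Mt U22_U02 ->
  (5 <= r)%N /\ (t \notin ground Mt -> (6 <= r)%N).
Proof.
move=> HM r0 /(minor_extract HM) [J [c [d [sJ cG dG [cJ dJ cd hJ] [cs ds]]]]].
have := spike_bound r0 cJ dJ cd hJ cs ds.
split; first by lia.
move=> tG; move: H; rewrite (_ : t \notin c |: (d |: J)) //.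
  by lia.
rewrite !inE; apply/negP => /orP [/eqP et | /orP [/eqP et | tJ]].
- by move: tG; rewrite et cG.
- by move: tG; rewrite et dG.
- by move: tG; rewrite (subsetP sJ _ tJ).
Qed.

Lemma consA (Mt : matroid 'I_(r+r+1)) (p q u v mm : 'I_r) :
  (forall I, indep Mt I = (I \subset ground Mt) && free (cols M I)) ->
  uniq [:: (mm : nat); (p : nat); (q : nat); (u : nat); (v : nat)] ->
  (forall z, z \in [set xs p; xs q; t; xs u; xs v; ys p; ys q] -> z \in ground Mt) ->
  has_minor_iso Mt U22_U02.
Proof.
move=> HM; rewrite /= !inE => Hd HG.
have Bp := ltn_ord p; have Bq := ltn_ord q; have Bu := ltn_ord u.
have Bv := ltn_ord v; have Bm := ltn_ord mm.
have G z : z \in [set xs p; xs q; t; xs u; xs v; ys p; ys q] -> z \in ground Mt := HG z.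
apply: (minor_construct HM (C := [set xs p; xs q; t]) (a := xs u) (b := xs v)
   (c := ys p) (d := ys q)).
- by apply/subsetP => z zC; apply: G; move: zC; rewrite !inE => /orP [/orP [] |] ->; rewrite ?orbT.
- by apply: G; rewrite !inE eqxx ?orbT.
- by apply: G; rewrite !inE eqxx ?orbT.
- by apply: G; rewrite !inE eqxx ?orbT.
- by apply: G; rewrite !inE eqxx ?orbT.
- rewrite !inE -!val_eqE /=; lia.
- rewrite !inE -!val_eqE /=; lia.
- rewrite !inE -!val_eqE /=; lia.
- rewrite !inE -!val_eqE /=; lia.
- rewrite /= !inE -!val_eqE /=; lia.
- apply: free_nozs => Z sZ zZ.
  have nin z : z \notin [set xs u; xs v; xs p; xs q; t] -> z \notin Z.
    by apply: contra => /(subsetP sZ); rewrite !inE !orbA.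
  have ny : forall l, ys l \notin Z.
    move=> l; apply: nin; rewrite !inE -!val_eqE /=; have := ltn_ord l; lia.
  have n0 : nY Z = 0 by rewrite (nY_one (p := p)) ?(negbTE (ny p)) // => l _.
  have tZ : t \notin Z.
    have := zs_coord mm zZ; rewrite n0 (negbTE (ny mm)) (negbTE (nin _ _)).
      by rewrite subr0 !add0r => /F2b ->.
    rewrite !inE -!val_eqE /=; lia.
  apply/setP => z; rewrite inE; apply/negbTE/negP => zZ'.
  have := subsetP sZ z zZ'; rewrite !inE !orbA => /orP [/orP [/orP [/orP [] |] |] |] /eqP ez;
    subst z; move: zZ'; apply/negP; rewrite ?tZ //; apply: (xs_out zZ (ny _) n0 tZ).
- rewrite col_ys_t; apply: memvD; apply: col_span; rewrite !inE eqxx ?orbT //.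
- rewrite col_ys_t; apply: memvD; apply: col_span; rewrite !inE eqxx ?orbT //.
Qed.
End Final.


Section Final2.
Variable r : nat.
Notation t := (tip r).
Notation M := (spike_mx r).

Lemma consB (Mt : matroid 'I_(r+r+1)) (p q w u v mm : 'I_r) :
  (forall I, indep Mt I = (I \subset ground Mt) && free (cols M I)) ->
  (p < q)%N -> (q < w)%N -> (w < u)%N -> (u < v)%N -> (v < mm)%N ->
  (forall z, z \in [set xs p; ys p; xs q; xs w; xs u; xs v; ys q; ys w] -> z \in ground Mt) ->
  has_minor_iso Mt U22_U02.
Proof.
move=> HM h1 h2 h3 h4 h5 HG.
have Bm := ltn_ord mm.
have G z : z \in [set xs p; ys p; xs q; xs w; xs u; xs v; ys q; ys w] -> z \in ground Mt := HG z.
apply: (minor_construct HM (C := [set xs p; ys p; xs q; xs w]) (a := xs u) (b := xs v)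
   (c := ys q) (d := ys w)).
- apply/subsetP => z zC; apply: G; move: zC; rewrite !inE ?orbA.
  by move=> /orP [/orP [/orP [] |] |] ->; rewrite ?orbT.
- by apply: G; rewrite !inE eqxx ?orbT.
- by apply: G; rewrite !inE eqxx ?orbT.
- by apply: G; rewrite !inE eqxx ?orbT.
- by apply: G; rewrite !inE eqxx ?orbT.
- rewrite !inE -!val_eqE /=; lia.
- rewrite !inE -!val_eqE /=; lia.
- rewrite !inE -!val_eqE /=; lia.
- rewrite !inE -!val_eqE /=; lia.
- rewrite /= !inE -!val_eqE /=; lia.
- apply: free_nozs => Z sZ zZ.
  have nin z : z \notin [set xs u; xs v; xs p; ys p; xs q; xs w] -> z \notin Z.
    by apply: contra => /(subsetP sZ); rewrite !inE ?orbA.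
  have ny : forall l, l != p -> ys l \notin Z.
    move=> l; rewrite -val_eqE => lp; apply: nin; rewrite !inE -!val_eqE /=.
    have := ltn_ord l; move: lp; rewrite /=; lia.
  have tZ : t \notin Z by apply: nin; rewrite !inE -!val_eqE /=; lia.
  have e1 := nY_one ny.
  have yp : ys p \notin Z.
    have := zs_coord mm zZ; rewrite e1 (negbTE (ny mm _)) ?(negbTE tZ) ?(negbTE (nin (xs mm) _)).
    - by rewrite subr0 add0r addr0 => /F2b ->.
    - rewrite !inE -!val_eqE /=; lia.
    - rewrite -val_eqE /=; lia.
  have n0 : nY Z = 0 by rewrite e1 (negbTE yp).
  have ny' l : ys l \notin Z.
    by case: (eqVneq l p) => [->//|]; apply: ny.
  apply/setP => z; rewrite inE; apply/negbTE/negP => zZ'.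
  have := subsetP sZ z zZ'; rewrite !inE ?orbA;
  move=> /orP [/orP [/orP [/orP [/orP [] |] |] |] |] /eqP ez;
    subst z; move: zZ'; apply/negP; rewrite ?yp //; apply: (xs_out zZ (ny' _) n0 tZ).
- rewrite (col_ys_B p); apply: memvD; [apply: memvD|]; apply: col_span;
    rewrite !inE eqxx ?orbT //.
- rewrite (col_ys_B p); apply: memvD; [apply: memvD|]; apply: col_span;
    rewrite !inE eqxx ?orbT //.
Qed.
End Final2.

Local Close Scope ring_scope.

Theorem lemma4p2 (r : nat) (hr : (3 <= r)%N) :
  (two_two_uniform (spike r) <-> (r <= 4)%N) /\
  (forall y : 'I_(r + r + 1), y != tip r ->
     (two_two_uniform (delete (spike r) [set y]) <-> (r <= 4)%N)) /\
  (two_two_uniform (delete (spike r) [set tip r]) <-> (r <= 5)%N).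
Proof.
have r0 : (0 < r)%N by lia.
split; [|split].
- split.
    move=> H; case: (leqP r 4) => // h5; exfalso; apply: H.
    have h0 : (0 < r)%N by lia. have h1 : (1 < r)%N by lia.
    have h2 : (2 < r)%N by lia. have h3 : (3 < r)%N by lia. have h4 : (4 < r)%N by lia.
    apply: (consA (p := Ordinal h0) (q := Ordinal h1) (u := Ordinal h2) (v := Ordinal h3)
      (mm := Ordinal h4) (@HM_spike r)) => // z _; by rewrite inE.
  move=> h4 /(bound (@HM_spike r) r0) [h5 _]; lia.
- move=> y yt; split.
    move=> H; case: (leqP r 4) => // h5; exfalso; apply: H.
    have [mm hy] : exists mm : 'I_r, y = xs mm \/ y = ys mm.
      case: (decomp y) => [[i ->]|[[i ->]|et]]; [by exists i; left|by exists i; right|].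
      by rewrite et eqxx in yt.
    have Bm := ltn_ord mm.
    have o k : (k < 4)%N -> (bump mm k < r)%N by rewrite /bump; lia.
    apply: (consA (p := Ordinal (o 0%N isT)) (q := Ordinal (o 1%N isT))
      (u := Ordinal (o 2%N isT)) (v := Ordinal (o 3%N isT)) (mm := mm)
      (@HM_del r [set y])).
      rewrite /= !inE /bump; lia.
    move=> z zs; rewrite /= !inE andbT.
    case: hy => ->; move: zs; rewrite !inE ?orbA;
      move=> /orP [/orP [/orP [/orP [/orP [/orP [] |] |] |] |] |] /eqP ->;
      rewrite -val_eqE /= /bump; lia.
  move=> h4 /(bound (@HM_del r [set y]) r0) [h5 _]; lia.
- split.
    move=> H; case: (leqP r 5) => // h6; exfalso; apply: H.
    have h0 : (0 < r)%N by lia. have h1 : (1 < r)%N by lia.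
    have h2 : (2 < r)%N by lia. have h3 : (3 < r)%N by lia. have h4 : (4 < r)%N by lia.
    have h5 : (5 < r)%N by lia.
    apply: (consB (p := Ordinal h0) (q := Ordinal h1) (w := Ordinal h2) (u := Ordinal h3)
      (v := Ordinal h4) (mm := Ordinal h5) (@HM_del r [set tip r])) => // z zs.

    rewrite /= !inE andbT; move: zs; rewrite !inE ?orbA.
    move=> /orP [/orP [/orP [/orP [/orP [/orP [/orP [] |] |] |] |] |] |] /eqP ->;
      rewrite -val_eqE /=; lia.
  move=> h5 /(bound (@HM_del r [set tip r]) r0) [_ h6].
  have : (tip r \notin ground (delete (spike r) [set tip r])) by rewrite !inE eqxx.
  move/h6; lia.
Qed.
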